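(* Let $m=(m_1,m_2)\in\mathbb{R}^2$ with $m_1>0$ and $m_2\geq 0$. Let $b_1\in\mathbb{R}$, $b_2\in\mathbb{Z}$, and $L_1,L_2$ positive integers with $L_1\geq \frac{m_2}{m_1}+1$. Then the set $$P(b_1,b_2,L_1,L_2)=\Big\{x\in\mathbb{Z}^2:\ 0\leq \tfrac{m}{m_1}\cdot(x-b)<L_1,\ 0\leq x_2-b_2<L_2\Big\},\qquad b=(b_1,b_2),$$ is connected as a subgraph of the nearest-neighbor graph of $\mathbb{Z}^2$.
   Context: Two points of $\mathbb{Z}^2$ are neighbors if they differ by $\pm e_1$ or $\pm e_2$; a subset is connected if the induced subgraph is connected. *)

(* Defs.v *)
From Stdlib Require Import Reals ZArith Relations.
Open Scope R_scope.

Definition pt := (Z * Z)%type.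

Definition zadj (u v : pt) : Prop :=
  (fst v = fst u + 1 /\ snd v = snd u)%Z \/
  (fst v = fst u - 1 /\ snd v = snd u)%Z \/
  (fst v = fst u /\ snd v = snd u + 1)%Z \/
  (fst v = fst u /\ snd v = snd u - 1)%Z.

Definition induced_adj (S : pt -> Prop) (u v : pt) : Prop :=
  S u /\ S v /\ zadj u v.

Definition connectedZ2 (S : pt -> Prop) : Prop :=
  (exists x, S x) /\
  forall x y, S x -> S y -> clos_refl_trans pt (induced_adj S) x y.

Definition Pset (m1 m2 b1 : R) (b2 L1 L2 : Z) (x : pt) : Prop :=
  let d := (m1 * (IZR (fst x) - b1) + m2 * (IZR (snd x) - IZR b2)) / m1 in
  0 <= d < IZR L1 /\ (0 <= snd x - b2 < L2)%Z.

(* Main.v *)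
Require Import Defs.
From Stdlib Require Import Reals ZArith Relations Lra Lia.
Open Scope R_scope.

Lemma crt_sym (A : Type) (R : A -> A -> Prop) :
  (forall u v, R u v -> R v u) ->
  forall x y, clos_refl_trans A R x y -> clos_refl_trans A R y x.
Proof.
  intros HR x y H; induction H.
  - apply rt_step; auto.
  - apply rt_refl.
  - eapply rt_trans; eauto.
Qed.

Lemma induced_sym S u v : induced_adj S u v -> induced_adj S v u.
Proof.
  unfold induced_adj, zadj; intros [A [B C]]; split; [|split]; auto; lia.
Qed.

Definition ceilZ (a : R) : Z := (- (up (- a) - 1))%Z.

Lemma ceilZ_spec a : a <= IZR (ceilZ a) < a + 1.
Proof.
  unfold ceilZ. destruct (archimed (- a)) as [H1 H2].
  rewrite opp_IZR, minus_IZR. lra.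
Qed.

Lemma Pset_iff m1 m2 b1 b2 L1 L2 x1 y : 0 < m1 ->
  (Pset m1 m2 b1 b2 L1 L2 (x1, y) <->
   (0 <= IZR x1 - b1 + m2 / m1 * (IZR y - IZR b2) < IZR L1 /\ (0 <= y - b2 < L2)%Z)).
Proof.
  intros Hm. unfold Pset; simpl.
  replace ((m1 * (IZR x1 - b1) + m2 * (IZR y - IZR b2)) / m1)
    with (IZR x1 - b1 + m2 / m1 * (IZR y - IZR b2)) by (field; lra).
  tauto.
Qed.

Lemma row_conv m1 m2 b1 b2 L1 L2 p q z y : 0 < m1 ->
  Pset m1 m2 b1 b2 L1 L2 (p, y) -> Pset m1 m2 b1 b2 L1 L2 (q, y) ->
  (p <= z <= q)%Z -> Pset m1 m2 b1 b2 L1 L2 (z, y).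
Proof.
  intros Hm Hp Hq Hz. rewrite Pset_iff in * by auto.
  set (t := m2 / m1 * (IZR y - IZR b2)) in *.
  assert (IZR p <= IZR z) by (apply IZR_le; lia).
  assert (IZR z <= IZR q) by (apply IZR_le; lia).
  split; [lra|lia].
Qed.

Lemma horiz_nat m1 m2 b1 b2 L1 L2 : 0 < m1 -> forall k p y,
  Pset m1 m2 b1 b2 L1 L2 (p, y) -> Pset m1 m2 b1 b2 L1 L2 (p + Z.of_nat k, y)%Z ->
  clos_refl_trans pt (induced_adj (Pset m1 m2 b1 b2 L1 L2)) (p, y) (p + Z.of_nat k, y)%Z.
Proof.
  intros Hm k; induction k; intros p y Hp Hk.
  - simpl. rewrite Z.add_0_r. apply rt_refl.
  - assert (Hk' : Pset m1 m2 b1 b2 L1 L2 (p + Z.of_nat k, y)%Z).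
    { apply row_conv with (p := p) (q := (p + Z.of_nat (S k))%Z); auto; lia. }
    apply rt_trans with (p + Z.of_nat k, y)%Z; auto.
    apply rt_step. split; [|split]; auto. unfold zadj; simpl; left; lia.
Qed.

Lemma horiz m1 m2 b1 b2 L1 L2 p q y : 0 < m1 ->
  Pset m1 m2 b1 b2 L1 L2 (p, y) -> Pset m1 m2 b1 b2 L1 L2 (q, y) ->
  clos_refl_trans pt (induced_adj (Pset m1 m2 b1 b2 L1 L2)) (p, y) (q, y).
Proof.
  intros Hm Hp Hq. destruct (Z.le_gt_cases p q).
  - replace q with (p + Z.of_nat (Z.to_nat (q - p)))%Z in * by lia.
    apply horiz_nat; auto.
  - apply crt_sym; [apply induced_sym|].
    replace p with (q + Z.of_nat (Z.to_nat (p - q)))%Z in * by lia.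
    apply horiz_nat; auto.
Qed.

Definition gpt m1 m2 b1 b2 (y : Z) : pt :=
  (ceilZ (b1 - m2 / m1 * (IZR y - IZR b2)), y).

Lemma g_in m1 m2 b1 b2 L1 L2 y : 0 < m1 -> (0 < L1)%Z ->
  (0 <= y - b2 < L2)%Z -> Pset m1 m2 b1 b2 L1 L2 (gpt m1 m2 b1 b2 y).
Proof.
  intros Hm HL Hy. unfold gpt. rewrite Pset_iff by auto.
  pose proof (ceilZ_spec (b1 - m2 / m1 * (IZR y - IZR b2))).
  assert (1 <= IZR L1) by (apply IZR_le; lia).
  split; auto. lra.
Qed.

Lemma g_up m1 m2 b1 b2 L1 L2 y : 0 < m1 -> 0 <= m2 -> (0 < L1)%Z ->
  IZR L1 >= m2 / m1 + 1 ->
  (0 <= y - b2)%Z -> (y + 1 - b2 < L2)%Z ->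
  Pset m1 m2 b1 b2 L1 L2 (fst (gpt m1 m2 b1 b2 y), y + 1)%Z.
Proof.
  intros Hm Hm2 HL HL1 Hy1 Hy2. unfold gpt; simpl. rewrite Pset_iff by auto.
  pose proof (ceilZ_spec (b1 - m2 / m1 * (IZR y - IZR b2))).
  assert (0 <= m2 / m1).
  { unfold Rdiv. apply Rmult_le_pos; auto. left; apply Rinv_0_lt_compat; auto. }
  rewrite plus_IZR.
  replace (m2 / m1 * (IZR y + 1 - IZR b2)) with (m2 / m1 * (IZR y - IZR b2) + m2 / m1) by ring.
  set (t := m2 / m1 * (IZR y - IZR b2)) in *. set (r := m2 / m1) in *.
  split; [lra | lia].
Qed.

Lemma chain m1 m2 b1 b2 L1 L2 : 0 < m1 -> 0 <= m2 -> (0 < L1)%Z ->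
  IZR L1 >= m2 / m1 + 1 -> forall k : nat, (Z.of_nat k < L2)%Z ->
  clos_refl_trans pt (induced_adj (Pset m1 m2 b1 b2 L1 L2))
    (gpt m1 m2 b1 b2 b2) (gpt m1 m2 b1 b2 (b2 + Z.of_nat k)).
Proof.
  intros Hm Hm2 HL HL1 k; induction k; intros Hk.
  - simpl. rewrite Z.add_0_r. apply rt_refl.
  - apply rt_trans with (gpt m1 m2 b1 b2 (b2 + Z.of_nat k)).
    { apply IHk; lia. }
    set (y := (b2 + Z.of_nat k)%Z).
    assert (Hup : Pset m1 m2 b1 b2 L1 L2 (fst (gpt m1 m2 b1 b2 y), y + 1)%Z).
    { apply g_up; unfold y; auto; lia. }
    replace (b2 + Z.of_nat (S k))%Z with (y + 1)%Z by (unfold y; lia).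
    apply rt_trans with (fst (gpt m1 m2 b1 b2 y), y + 1)%Z.
    + apply rt_step. split; [|split]; auto.
      * apply g_in; unfold y; auto; lia.
      * unfold zadj, gpt; simpl. right; right; left; lia.
    + unfold gpt at 2. apply horiz; auto.
      apply g_in; unfold y; auto; lia.
Qed.

Lemma to_base m1 m2 b1 b2 L1 L2 x : 0 < m1 -> 0 <= m2 -> (0 < L1)%Z ->
  IZR L1 >= m2 / m1 + 1 -> Pset m1 m2 b1 b2 L1 L2 x ->
  clos_refl_trans pt (induced_adj (Pset m1 m2 b1 b2 L1 L2)) x (gpt m1 m2 b1 b2 b2).
Proof.
  intros Hm Hm2 HL HL1 Hx. destruct x as [x1 x2].
  assert (Hr : (0 <= x2 - b2 < L2)%Z) by (apply Pset_iff in Hx; tauto).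
  apply rt_trans with (gpt m1 m2 b1 b2 x2).
  - unfold gpt. apply horiz; auto. apply g_in; auto.
  - apply crt_sym; [apply induced_sym|].
    replace x2 with (b2 + Z.of_nat (Z.to_nat (x2 - b2)))%Z by lia.
    apply chain; auto; lia.
Qed.

Theorem mainTheorem5 (m1 m2 b1 : R) (b2 L1 L2 : Z)
  (hm1 : 0 < m1) (hm2 : 0 <= m2)
  (hL1 : (0 < L1)%Z) (hL2 : (0 < L2)%Z)
  (hL1m : IZR L1 >= m2 / m1 + 1) :
  connectedZ2 (Pset m1 m2 b1 b2 L1 L2).
Proof.
  split.
  - exists (gpt m1 m2 b1 b2 b2). apply g_in; auto; lia.
  - intros x y Hx Hy. apply rt_trans with (gpt m1 m2 b1 b2 b2).
    + apply to_base; auto.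
    + apply crt_sym; [apply induced_sym|]. apply to_base; auto.
Qed.
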